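(* Let $(K,*,\circ)$ be a left skew brace and let $G\subseteq K$ be a sub-skew brace (a subset which is a subgroup of both $(K,* )$ and $(K,\circ)$), with inclusion $i\colon G\to K$. Then $i$ is a normal subobject in the category $\mathsf{SKB}$ of left skew braces if and only if the following three conditions hold: (1) $G$ is a normal subgroup of $(K,* )$; (2) $G$ is a normal subgroup of $(K,\circ)$; (3') $\lambda_x(G)=G$ for all $x\in K$.
   Context: A (left) skew brace is a triple $(A,*,\circ)$ with $(A,* )$ and $(A,\circ)$ groups such that $a\circ(b*c)=(a\circ b)*a^{-*}*(a\circ c)$ for all $a,b,c\in A$; here $a^{-*}$ and $a^{-\circ}$ denote inverses in $(A,* )$ and $(A,\circ)$. The two groups have the same identity $1$. Morphisms in $\mathsf{SKB}$ are maps that are homomorphisms for both operations. For $a,u\in A$ put $\lambda_a(u)=a^{-*}*(a\circ u)$. A congruence on $K$ is an equivalence relation $R\subseteq K\times K$ that is a sub-skew brace of the product skew brace $K\times K$ (componentwise operations). A sub-skew brace $G\subseteq K$ is called normal (normal subobject in $\mathsf{SKB}$) if there is a congruence $R$ on $K$ such that $G$ is exactly the $R$-equivalence class of $1$ (equivalently, in categorical terms, the inclusion is normal to some internal equivalence relation $R$: the restriction of $R$ to $G$ is $G\times G$ and whenever $g\in G$ and $(g,y)\in R$ then $y\in G$). *)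

(* Defs.v *)
Record skew_brace := SkewBrace {
  sb_carrier :> Type;
  sb_star : sb_carrier -> sb_carrier -> sb_carrier;
  sb_circ : sb_carrier -> sb_carrier -> sb_carrier;
  sb_one  : sb_carrier;
  sb_sinv : sb_carrier -> sb_carrier;
  sb_cinv : sb_carrier -> sb_carrier;
  sb_starA : forall a b c, sb_star a (sb_star b c) = sb_star (sb_star a b) c;
  sb_star1l : forall a, sb_star sb_one a = a;
  sb_star1r : forall a, sb_star a sb_one = a;
  sb_starVl : forall a, sb_star (sb_sinv a) a = sb_one;
  sb_starVr : forall a, sb_star a (sb_sinv a) = sb_one;
  sb_circA : forall a b c, sb_circ a (sb_circ b c) = sb_circ (sb_circ a b) c;
  sb_circ1l : forall a, sb_circ sb_one a = a;
  sb_circ1r : forall a, sb_circ a sb_one = a;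
  sb_circVl : forall a, sb_circ (sb_cinv a) a = sb_one;
  sb_circVr : forall a, sb_circ a (sb_cinv a) = sb_one;
  sb_compat : forall a b c,
    sb_circ a (sb_star b c) = sb_star (sb_circ a b) (sb_star (sb_sinv a) (sb_circ a c))
}.

Arguments sb_star {s}.
Arguments sb_circ {s}.
Arguments sb_one {s}.
Arguments sb_sinv {s}.
Arguments sb_cinv {s}.

Definition sb_lambda {K : skew_brace} (a u : K) : K :=
  sb_star (sb_sinv a) (sb_circ a u).

Definition sub_skew_brace (K : skew_brace) (G : K -> Prop) : Prop :=
  G sb_one /\
  (forall a b, G a -> G b -> G (sb_star a b)) /\
  (forall a, G a -> G (sb_sinv a)) /\
  (forall a b, G a -> G b -> G (sb_circ a b)) /\
  (forall a, G a -> G (sb_cinv a)).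

(* A congruence: an equivalence relation which is a sub-skew brace of K x K
   (componentwise operations). *)
Definition sb_congruence (K : skew_brace) (R : K -> K -> Prop) : Prop :=
  (forall a, R a a) /\
  (forall a b, R a b -> R b a) /\
  (forall a b c, R a b -> R b c -> R a c) /\
  R sb_one sb_one /\
  (forall a b c d, R a b -> R c d -> R (sb_star a c) (sb_star b d)) /\
  (forall a b, R a b -> R (sb_sinv a) (sb_sinv b)) /\
  (forall a b c d, R a b -> R c d -> R (sb_circ a c) (sb_circ b d)) /\
  (forall a b, R a b -> R (sb_cinv a) (sb_cinv b)).

(* G is a normal subobject in SKB: G is the R-class of 1 for some congruence R. *)
Definition sb_normal_subobject (K : skew_brace) (G : K -> Prop) : Prop :=
  exists R : K -> K -> Prop, sb_congruence K R /\ (forall y, G y <-> R sb_one y).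

(* G is a normal subgroup of (K, * ) (G assumed to be a subgroup) *)
Definition star_normal (K : skew_brace) (G : K -> Prop) : Prop :=
  forall x g, G g -> G (sb_star (sb_star x g) (sb_sinv x)).

Definition circ_normal (K : skew_brace) (G : K -> Prop) : Prop :=
  forall x g, G g -> G (sb_circ (sb_circ x g) (sb_cinv x)).

Definition lambda_invariant (K : skew_brace) (G : K -> Prop) : Prop :=
  forall x y, G y <-> (exists g, G g /\ sb_lambda x g = y).

(* Main.v *)
Require Import Defs.

Lemma s_cancel_l (K : skew_brace) (a b c : K) : sb_star a b = sb_star a c -> b = c.
Proof.
  intro H. rewrite <- (sb_star1l K b), <- (sb_star1l K c), <- (sb_starVl K a).
  rewrite <- !sb_starA, H. reflexivity.
Qed.

Lemma c_cancel_l (K : skew_brace) (a b c : K) : sb_circ a b = sb_circ a c -> b = c.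
Proof.
  intro H. rewrite <- (sb_circ1l K b), <- (sb_circ1l K c), <- (sb_circVl K a).
  rewrite <- !sb_circA, H. reflexivity.
Qed.

Lemma s_inv_inv (K : skew_brace) (a : K) : sb_sinv (sb_sinv a) = a.
Proof.
  apply (s_cancel_l K (sb_sinv a)). rewrite sb_starVr, sb_starVl. reflexivity.
Qed.

Lemma c_inv_inv (K : skew_brace) (a : K) : sb_cinv (sb_cinv a) = a.
Proof.
  apply (c_cancel_l K (sb_cinv a)). rewrite sb_circVr, sb_circVl. reflexivity.
Qed.

Lemma s_inv_mul (K : skew_brace) (a b : K) :
  sb_sinv (sb_star a b) = sb_star (sb_sinv b) (sb_sinv a).
Proof.
  apply (s_cancel_l K (sb_star a b)). rewrite sb_starVr.
  rewrite !sb_starA. rewrite <- (sb_starA K a b), sb_starVr, sb_star1r, sb_starVr.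
  reflexivity.
Qed.

Lemma c_inv_mul (K : skew_brace) (a b : K) :
  sb_cinv (sb_circ a b) = sb_circ (sb_cinv b) (sb_cinv a).
Proof.
  apply (c_cancel_l K (sb_circ a b)). rewrite sb_circVr.
  rewrite !sb_circA. rewrite <- (sb_circA K a b), sb_circVr, sb_circ1r, sb_circVr.
  reflexivity.
Qed.

Lemma s_inv_one (K : skew_brace) : sb_sinv (@sb_one K) = sb_one.
Proof.
  rewrite <- (sb_star1l K (sb_sinv sb_one)). apply sb_starVr.
Qed.

Lemma s_rK (K : skew_brace) (x a : K) : sb_star (sb_star x a) (sb_sinv a) = x.
Proof. rewrite <- sb_starA, sb_starVr, sb_star1r. reflexivity. Qed.

Lemma c_rK (K : skew_brace) (x a : K) : sb_circ (sb_circ x a) (sb_cinv a) = x.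
Proof. rewrite <- sb_circA, sb_circVr, sb_circ1r. reflexivity. Qed.

Lemma s_lK (K : skew_brace) (x a : K) : sb_star (sb_star x (sb_sinv a)) a = x.
Proof. rewrite <- sb_starA, sb_starVl, sb_star1r. reflexivity. Qed.

Lemma c_lK (K : skew_brace) (x a : K) : sb_circ (sb_circ x (sb_cinv a)) a = x.
Proof. rewrite <- sb_circA, sb_circVl, sb_circ1r. reflexivity. Qed.

Lemma lam_inv (K : skew_brace) (a b : K) :
  sb_lambda a (sb_circ (sb_cinv a) b) = sb_star (sb_sinv a) b.
Proof. unfold sb_lambda. rewrite sb_circA, sb_circVr, sb_circ1l. reflexivity. Qed.

Theorem proposition2p4 (K : skew_brace) (G : K -> Prop) :
  sub_skew_brace K G ->
  (sb_normal_subobject K G <->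
     (star_normal K G /\ circ_normal K G /\ lambda_invariant K G)).
Proof.
  intros [G1 [GM [GV [GC GCV]]]]. split.
  - intros [R [[Rr [Rs [Rt [R1 [RM [RV [RC RCV]]]]]]] HG]].
    split; [|split].
    + intros x g Hg. apply HG. apply HG in Hg.
      assert (H := RM _ _ _ _ (RM _ _ _ _ (Rr x) Hg) (Rr (sb_sinv x))).
      rewrite sb_star1r, sb_starVr in H. exact H.
    + intros x g Hg. apply HG. apply HG in Hg.
      assert (H := RC _ _ _ _ (RC _ _ _ _ (Rr x) Hg) (Rr (sb_cinv x))).
      rewrite sb_circ1r, sb_circVr in H. exact H.
    + intros x y. split.
      * intro Hy. exists (sb_circ (sb_cinv x) (sb_star x y)). split.
        -- apply HG. apply HG in Hy.
           assert (H := RC _ _ _ _ (Rr (sb_cinv x)) (RM _ _ _ _ (Rr x) Hy)).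
           rewrite sb_star1r, sb_circVl in H. exact H.
        -- rewrite lam_inv, sb_starA, sb_starVl, sb_star1l. reflexivity.
      * intros [g [Hg <-]]. apply HG. apply HG in Hg.
        assert (H := RM _ _ _ _ (Rr (sb_sinv x)) (RC _ _ _ _ (Rr x) Hg)).
        rewrite sb_circ1r, sb_starVl in H. exact H.
  - intros [SN [CN LI]].
    assert (Hlam : forall a u, G (sb_lambda a u) <-> G u).
    { intros a u. split.
      - intro H. destruct (proj1 (LI a _) H) as [g [Hg E]].
        unfold sb_lambda in E. apply s_cancel_l, c_cancel_l in E. subst; exact Hg.
      - intro H. apply (LI a). exists u. split; auto. }
    assert (Key : forall a b, G (sb_star (sb_sinv a) b) <-> G (sb_circ (sb_cinv a) b)).
    { intros a b. rewrite <- lam_inv. apply Hlam. }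
    exists (fun a b => G (sb_star (sb_sinv a) b)).
    split.
    + split; [|split; [|split; [|split; [|split; [|split; [|split]]]]]].
      * intro a. rewrite sb_starVl. exact G1.
      * intros a b H. apply GV in H. rewrite s_inv_mul, s_inv_inv in H. exact H.
      * intros a b c H1 H2. assert (H := GM _ _ H1 H2).
        rewrite sb_starA, <- (sb_starA K _ b), sb_starVr, sb_star1r in H. exact H.
      * rewrite sb_starVl. exact G1.
      * intros a b c d H1 H2.
        assert (H := GM _ _ (SN (sb_sinv c) _ H1) H2).
        rewrite s_inv_inv in H. rewrite s_inv_mul.
        rewrite !sb_starA in H. rewrite !sb_starA. rewrite s_rK in H. exact H.
      * intros a b H. rewrite s_inv_inv.
        assert (H' := SN a _ (GV _ H)).
        rewrite s_inv_mul, s_inv_inv in H'. rewrite !sb_starA in H'.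
        rewrite s_rK in H'. exact H'.
      * intros a b c d H1 H2. apply Key in H1. apply Key in H2. apply Key.
        assert (H := GC _ _ (CN (sb_cinv c) _ H1) H2).
        rewrite c_inv_inv in H. rewrite c_inv_mul.
        rewrite !sb_circA in H. rewrite !sb_circA. rewrite c_rK in H. exact H.
      * intros a b H. apply Key in H. apply Key. rewrite c_inv_inv.
        assert (H' := CN a _ (GCV _ H)).
        rewrite c_inv_mul, c_inv_inv in H'. rewrite !sb_circA in H'.
        rewrite c_rK in H'. exact H'.
    + intro y. rewrite s_inv_one, sb_star1l. tauto.
Qed.
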